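(* Let $R$ be a finite commutative ring with identity. Then $$\chi\big(\mathrm{Reg}(\Gamma(R))\big)\le |J(R)|\,\chi\big(\mathrm{Reg}(\Gamma(R/J(R)))\big).$$ Moreover, if $2\notin Z(R)$, then $\chi\big(\mathrm{Reg}(\Gamma(R))\big)=\chi\big(\mathrm{Reg}(\Gamma(R/J(R)))\big)$.
   Context: For a commutative ring $S$, $Z(S)$ is the set of zero-divisors (including $0$), $\mathrm{Reg}(S)=S\setminus Z(S)$, and $J(S)$ is the Jacobson radical. The total graph $T(\Gamma(S))$ is the simple graph with vertex set $S$ in which distinct $x,y$ are adjacent iff $x+y\in Z(S)$; $\mathrm{Reg}(\Gamma(S))$ is its induced subgraph on $\mathrm{Reg}(S)$. $\chi$ denotes chromatic number. *)

(* Defs.v *)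
From mathcomp Require Import all_boot all_order all_algebra.
Set Implicit Arguments. Unset Strict Implicit. Unset Printing Implicit Defensive.
Import GRing.Theory.
Local Open Scope ring_scope.

Section Defs.
Variable S : finComNzRingType.

(* Z(S): zero-divisors, including 0 *)
Definition zdiv : {set S} := [set x | [exists y : S, (y != 0) && (x * y == 0)]].
Definition regs : {set S} := ~: zdiv.

Definition is_ideal (I : {set S}) : bool :=
  [&& (0 : S) \in I,
      [forall x, forall y, (x \in I) ==> (y \in I) ==> (x + y \in I)] &
      [forall r, forall x, (x \in I) ==> (r * x \in I)]].
Definition is_maximal_ideal (I : {set S}) : bool :=
  [&& is_ideal I, (1 : S) \notin I &
      [forall K : {set S}, (is_ideal K && (I \subset K)) ==> ((K == I) || (K == setT))]].
Definition jacobson : {set S} := \bigcap_(I : {set S} | is_maximal_ideal I) I.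

Definition reg_adj (x y : S) : bool :=
  [&& x \in regs, y \in regs, x != y & x + y \in zdiv].

(* proper k-colouring of Reg(Gamma(S)) (colours of vertices outside Reg(S) irrelevant) *)
Definition reg_colorable (k : nat) : bool :=
  [exists c : {ffun S -> 'I_k}, [forall x, forall y, reg_adj x y ==> (c x != c y)]].

Lemma reg_colorable_exists : exists k, reg_colorable k.
Proof.
exists #|S|; apply/existsP; exists [ffun x => enum_rank x].
apply/forallP => x; apply/forallP => y; apply/implyP => /and4P [_ _ nxy _].
by rewrite !ffunE; apply: contra nxy => /eqP/enum_rank_inj ->.
Qed.

Definition chi_reg : nat := ex_minn reg_colorable_exists.
End Defs.

(* Main.v *)
Require Import Defs.
From mathcomp Require Import all_boot all_order all_algebra.
From mathcomp Require Import zify.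
Set Implicit Arguments. Unset Strict Implicit.
Import GRing.Theory.
Local Open Scope ring_scope.

Section Gen.
Variable R : finComNzRingType.

Lemma zdivE (x : R) : (x \in zdiv R) = [exists y, (y != 0) && (x * y == 0)].
Proof. by rewrite inE. Qed.

Lemma reg_inv (x : R) : x \notin zdiv R <-> exists y, x * y = 1.
Proof.
split.
- move=> nz.
  have inj : injective (fun y : R => x * y).
    move=> a b /= eab; apply/eqP; rewrite -subr_eq0; apply/negPn/negP => ne.
    move: nz; rewrite zdivE => /existsP; apply; exists (a - b).
    by rewrite ne mulrBr eab subrr /=.
  have [g gK Kg] := injF_bij inj.
  by exists (g 1); rewrite Kg.
- move=> [y xy]; rewrite zdivE; apply/existsP => [[z /andP [nz /eqP xz]]].
  move/eqP: nz; apply.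
  by rewrite -[z]mul1r -xy mulrC mulrA [z * x]mulrC xz mul0r.
Qed.

Lemma idealP (K : {set R}) : is_ideal K ->
  [/\ 0 \in K, forall x y, x \in K -> y \in K -> x + y \in K &
      forall r x, x \in K -> r * x \in K].
Proof.
move=> /and3P [K0 /forallP KD /forallP KM]; split => //.
- by move=> x y xK yK; move/forallP: (KD x) => /(_ y); rewrite xK yK.
- by move=> r x xK; move/forallP: (KM r) => /(_ x); rewrite xK.
Qed.

Lemma mk_ideal (K : {set R}) : 0 \in K ->
  (forall x y, x \in K -> y \in K -> x + y \in K) ->
  (forall r x, x \in K -> r * x \in K) -> is_ideal K.
Proof.
move=> K0 KD KM; apply/and3P; split => //.
- apply/forallP => x; apply/forallP => y; apply/implyP => xK; apply/implyP => yK.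
  exact: KD.
- apply/forallP => r; apply/forallP => x; apply/implyP => xK; exact: KM.
Qed.

Lemma jac0 : (0 : R) \in jacobson R.
Proof.
apply/bigcapP => I /and3P [iI _ _]; by case: (idealP iI).
Qed.

Lemma unit_1J (j : R) : j \in jacobson R -> exists y, (1 + j) * y = 1.
Proof.
move=> jJ.
case: (boolP [exists y, (1 + j) * y == 1]) => [/existsP [y /eqP]|nu]; first by eauto.
exfalso.
pose u := 1 + j.
pose P := fun K : {set R} => [&& is_ideal K, u \in K & (1 : R) \notin K].
pose I := [set u * r | r : R].
have PI : P I.
  apply/and3P; split.
  - apply: mk_ideal.
    + by apply/imsetP; exists 0; rewrite ?mulr0.
    + move=> x y /imsetP [a _ ->] /imsetP [b _ ->].
      by apply/imsetP; exists (a + b); rewrite ?mulrDr.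
    + move=> r x /imsetP [a _ ->].
      by apply/imsetP; exists (r * a); rewrite // mulrCA.
  - by apply/imsetP; exists 1; rewrite ?mulr1.
  - apply/imsetP => [[r _ e]]; move/negP: nu; apply; apply/existsP; exists r.
    by rewrite -e.
case: (arg_maxnP (fun K : {set R} => #|K|) PI) => M /and3P [iM uM n1M] maxM.
have MM : is_maximal_ideal M.
  apply/and3P; split => //.
  apply/forallP => K; apply/implyP => /andP [iK sMK].
  case: (idealP iK) => K0 KD KM.
  case: (boolP ((1 : R) \in K)) => [K1|nK1].
  - apply/orP; right; apply/eqP/setP => r; rewrite inE.
    by rewrite -[r]mulr1; apply: KM.
  - apply/orP; left; rewrite eq_sym eqEcard sMK /=.
    apply: maxM; apply/and3P; split => //.
    exact: (subsetP sMK).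
have jM : j \in M by move/bigcapP: jJ; apply.
case: (idealP iM) => M0 MD MMul.
move/negP: n1M; apply.
have -> : (1 : R) = u + (-1) * j by rewrite /u mulN1r addrK.
by apply: MD => //; apply: MMul.
Qed.

Lemma zdiv_mul (x y : R) : x \notin zdiv R -> y \notin zdiv R ->
  x * y \notin zdiv R.
Proof.
move=> /reg_inv [a xa] /reg_inv [b yb]; apply/reg_inv; exists (a * b).
by rewrite mulrACA xa yb mulr1.
Qed.

Lemma chi_col : reg_colorable R (chi_reg R).
Proof. by rewrite /chi_reg; case: ex_minnP. Qed.

Lemma chi_min k : reg_colorable R k -> (chi_reg R <= k)%N.
Proof. by rewrite /chi_reg; case: ex_minnP => m _; apply. Qed.

Lemma colP k : reflect (exists c : R -> 'I_k, forall x y, reg_adj x y -> c x != c y)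
  (reg_colorable R k).
Proof.
apply: (iffP existsP) => [[c /forallP H]|[c H]].
- exists c => x y a; move/forallP: (H x) => /(_ y); by rewrite a.
- exists [ffun x => c x]; apply/forallP => x; apply/forallP => y; apply/implyP => a.
  by rewrite !ffunE; apply: H.
Qed.

Lemma reg_adjE (x y : R) : reg_adj x y =
  [&& x \notin zdiv R, y \notin zdiv R, x != y & x + y \in zdiv R].
Proof. by rewrite /reg_adj /regs !inE. Qed.

End Gen.

Lemma pairo_lt a b (i : 'I_a) (j : 'I_b) : (i + a * j < a * b)%N.
Proof. have := ltn_ord i; have := ltn_ord j; nia. Qed.

Definition pairo a b (i : 'I_a) (j : 'I_b) : 'I_(a * b) := Ordinal (pairo_lt i j).

Lemma pairo_inj a b (i i' : 'I_a) (j j' : 'I_b) :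
  pairo i j = pairo i' j' -> i = i' /\ j = j'.
Proof.
move=> /(congr1 val) /= e.
have ha := ltn_ord i; have ha' := ltn_ord i'.
have a0 : (0 < a)%N by lia.
have e1 : ((i + a * j) %% a = i)%N by rewrite mulnC addnC modnMDl modn_small.
have e2 : ((i' + a * j') %% a = i')%N by rewrite mulnC addnC modnMDl modn_small.
have ii : i = i' :> nat by rewrite -e1 -e2 e.
split; first by apply: val_inj.
apply: val_inj => /=.
have e' : (a * j = a * j')%N by lia.
move/eqP: e'; by rewrite eqn_mul2l (negbTE (lt0n_neq0 a0)) => /eqP.
Qed.

Theorem lemma17 (R S : finComNzRingType) (f : {rmorphism R -> S}) :
  (forall s : S, exists r : R, f r = s) ->
  (forall r : R, (f r == 0) = (r \in jacobson R)) ->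
  (chi_reg R <= #|jacobson R| * chi_reg S)%N /\
  ((2%:R : R) \notin zdiv R -> chi_reg R = chi_reg S).
Proof.
move=> fsurj fker.
pose g (s : S) : R := odflt 0 [pick r | f r == s].
have fg s : f (g s) = s.
  rewrite /g; case: pickP => [r /eqP //|H].
  by have [r fr] := fsurj s; move: (H r); rewrite fr eqxx.
have zf r : (f r \in zdiv S) = (r \in zdiv R).
  rewrite -[LHS]negbK -[RHS]negbK; congr negb; apply/idP/idP.
  - move/reg_inv => [s frs]; apply/reg_inv.
    have := fker (r * g s - 1); rewrite rmorphB rmorph1 rmorphM fg frs subrr eqxx.
    move=> /esym /unit_1J [z]; rewrite addrC subrK => e.
    by exists (g s * z); rewrite mulrA.
  - move/reg_inv => [y ry]; apply/reg_inv; exists (f y).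
    by rewrite -rmorphM ry rmorph1.
have zgE s : (g s \in zdiv R) = (s \in zdiv S) by rewrite -zf fg.
split.
- have [c cP] := colP _ _ (chi_col S).
  have J0 := jac0 R.
  pose idx (x : R) := enum_rank_in J0 (x - g (f x)).
  have idxJ x : x - g (f x) \in jacobson R.
    by rewrite -fker rmorphB fg subrr.
  apply: chi_min; apply/colP.
  exists (fun x => pairo (idx x) (c (f x))) => x y.
  rewrite reg_adjE => /and4P [rx ry nxy sxy]; apply/negP => /eqP /pairo_inj [ei ec].
  case: (eqVneq (f x) (f y)) => [fxy|fxy].
  + move: ei; rewrite /idx => /enum_rank_in_inj.
    rewrite !idxJ fxy => /(_ isT isT) /subIr e.
    by rewrite e eqxx in nxy.
  + move/eqP: ec; apply: negP; apply: cP.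
    by rewrite reg_adjE !zf rx ry fxy -rmorphD zf sxy.
- move=> two.
  apply/eqP; rewrite eqn_leq; apply/andP; split.
  + have [c cP] := colP _ _ (chi_col S).
    apply: chi_min; apply/colP; exists (fun x => c (f x)) => x y.
    rewrite reg_adjE => /and4P [rx ry nxy sxy].
    case: (eqVneq (f x) (f y)) => [fxy|fxy].
    * exfalso; move/negP: (zdiv_mul two rx); apply.
      by rewrite -zf rmorphM rmorph_nat mulr_natl mulr2n {2}fxy -rmorphD zf.
    * apply: cP; by rewrite reg_adjE !zf rx ry fxy -rmorphD zf sxy.
  + have [d dP] := colP _ _ (chi_col R).
    apply: chi_min; apply/colP; exists (fun s => d (g s)) => s t.
    rewrite reg_adjE => /and4P [rs rt nst sst].
    apply: dP; rewrite reg_adjE !zgE rs rt /= -zf rmorphD !fg sst andbT.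
    by apply: contra nst => /eqP e; rewrite -(fg s) -(fg t) e.
Qed.
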